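(* Let $0\le\epsilon<1$ and let $\omega=(\omega_n)_{n\ge0}$ be a Markov chain on $\{-1,+1\}$ with transition matrix $Q=\begin{pmatrix}\epsilon&1-\epsilon\\1-\epsilon&\epsilon\end{pmatrix}$ started from its invariant distribution $\frac12(\delta_{-1}+\delta_{+1})$ (so $f(x)=x$). Set $p(\epsilon)=\sum_{t\ge1}K(t)\frac{1+(2\epsilon-1)^t}{2}$. Then the annealed critical point of the pinning model with disorder $\omega$ is $$h_c^a(\beta)=-\log\left(p(\epsilon)\cosh\beta+\sqrt{p(\epsilon)^2\cosh^2\beta-2p(\epsilon)+1}\right),\qquad \beta\ge0.$$
   Context: $K(n)$, $n\ge1$, is a probability distribution on $\{1,2,\dots\}$ with $K(n)>0$ for all $n$ (the interarrival law of a recurrent renewal process $\tau$ with $\tau_0=0$, $\delta_n=\mathbf 1_{\{n\in\tau\}}$). The partition function is $Z_{N,\beta,h,\omega}=E\big[\exp\big(\sum_{n=1}^N(\beta\omega_n+h)\delta_n\big)\delta_N\big]$, and the annealed critical point is $h_c^a(\beta)=\sup\{h: \lim_N\frac1N\log\mathbb{E}Z_{N,\beta,h,\omega}=0\}$, $\mathbb{E}$ denoting average over $\omega$. *)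

(* Defs.v *)
From Stdlib Require Import Reals Lra List.
Import ListNotations.
Open Scope R_scope.

(* All boolean lists of length n (true encodes +1 / a renewal point). *)
Fixpoint blists (n : nat) : list (list bool) :=
  match n with
  | O => [nil]
  | S m => map (cons true) (blists m) ++ map (cons false) (blists m)
  end.

Definition sumR {A : Type} (f : A -> R) (l : list A) : R :=
  fold_right (fun x acc => f x + acc) 0 l.

Definition spin (b : bool) : R := if b then 1 else -1.

Definition Qtrans (eps : R) (a b : bool) : R :=
  if Bool.eqb a b then eps else 1 - eps.

Fixpoint trans_prod (eps : R) (prev : bool) (rest : list bool) : R :=
  match rest with
  | nil => 1
  | b :: rest' => Qtrans eps prev b * trans_prod eps b rest'
  end.

(* Law of (omega_0, ..., omega_N), chain started from (delta_{-1}+delta_{+1})/2. *)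
Definition mc_prob (eps : R) (w : list bool) : R :=
  match w with
  | nil => 0
  | w0 :: rest => / 2 * trans_prod eps w0 rest
  end.

Fixpoint Kcum (K : nat -> R) (g : nat) : R :=
  match g with
  | O => 0
  | S g' => K (S g') + Kcum K g'
  end.

(* P( tau /\ {1..N} = {n : d_n = true} ) for d = (d_1,...,d_N), tau_0 = 0:
   product of K over the gaps, times the tail probability of the last gap.
   [gap] = number of steps since the last renewal. *)
Fixpoint ren_prob (K : nat -> R) (gap : nat) (d : list bool) : R :=
  match d with
  | nil => 1 - Kcum K gap
  | true :: d' => K (S gap) * ren_prob K 0 d'
  | false :: d' => ren_prob K (S gap) d'
  end.

(* sum_{n=1}^N (beta omega_n + h) delta_n, with ws = (omega_1..omega_N), d = (delta_1..delta_N) *)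
Fixpoint energy (beta h : R) (ws d : list bool) : R :=
  match ws, d with
  | w :: ws', b :: d' => (if b then beta * spin w + h else 0) + energy beta h ws' d'
  | _, _ => 0
  end.

Definition indic (b : bool) : R := if b then 1 else 0.

(* Quenched partition function Z_{N,beta,h,omega}, omega = (omega_0,...,omega_N) *)
Definition Zq (K : nat -> R) (beta h : R) (N : nat) (w : list bool) : R :=
  sumR (fun d => ren_prob K 0 d * exp (energy beta h (tl w) d) * indic (last d false))
       (blists N).

Definition EZ (K : nat -> R) (eps beta h : R) (N : nat) : R :=
  sumR (fun w => mc_prob eps w * Zq K beta h N w) (blists (S N)).

Definition zero_free_energy_set (K : nat -> R) (eps beta : R) : R -> Prop :=
  fun h => Un_cv (fun n => ln (EZ K eps beta h (S n)) / INR (S n)) 0.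

(* Main.v *)
Require Import Defs.
From Stdlib Require Import Reals Lra Lia List Arith Psatz.
Import ListNotations.
Open Scope R_scope.

Lemma sumR_app {A} (f : A -> R) l1 l2 : sumR f (l1 ++ l2) = sumR f l1 + sumR f l2.
Proof. induction l1; simpl; [ring| rewrite IHl1; ring]. Qed.
Lemma sumR_map {A B} (f : B -> R) (g : A -> B) l : sumR f (map g l) = sumR (fun x => f (g x)) l.
Proof. induction l; simpl; [ring| rewrite IHl; ring]. Qed.
Lemma sumR_ext {A} (f g : A -> R) l : (forall x, f x = g x) -> sumR f l = sumR g l.
Proof. intro H; induction l; simpl; [ring| rewrite IHl, H; ring]. Qed.
Lemma sumR_scal {A} (f : A -> R) c l : sumR (fun x => c * f x) l = c * sumR f l.
Proof. induction l; simpl; [ring| rewrite IHl; ring]. Qed.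
Lemma sumR_plus {A} (f g : A -> R) l : sumR (fun x => f x + g x) l = sumR f l + sumR g l.
Proof. induction l; simpl; [ring| rewrite IHl; ring]. Qed.

Lemma last_def (x d1 d2 : bool) l : last (x :: l) d1 = last (x :: l) d2.
Proof. revert x; induction l; intro x; [reflexivity|]. change (last (a :: l) d1 = last (a :: l) d2). apply IHl. Qed.
Lemma last_cons (c def : bool) d : last (c :: d) def = last d c.
Proof. destruct d as [|x d]; [reflexivity|]. change (last (x :: d) def = last (x :: d) c). apply last_def. Qed.

Definition Tm K eps beta h (a : bool) (g : nat) (def : bool) ws d : R :=
  trans_prod eps a ws * ren_prob K g d * exp (energy beta h ws d) * indic (last d def).

Definition Fq K eps beta h (a : bool) (g : nat) (def : bool) (n : nat) : R :=
  sumR (fun ws => sumR (fun d => Tm K eps beta h a g def ws d) (blists n)) (blists n).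

Definition Dw beta h (b : bool) := exp (beta * spin b + h).

Lemma inner_S K eps beta h a g def b ws n :
  sumR (fun d => Tm K eps beta h a g def (b :: ws) d) (blists (S n)) =
  Qtrans eps a b * (K (S g) * Dw beta h b * sumR (fun d => Tm K eps beta h b 0 true ws d) (blists n)
     + sumR (fun d => Tm K eps beta h b (S g) false ws d) (blists n)).
Proof.
  cbn [blists]. rewrite sumR_app, !sumR_map.
  rewrite Rmult_plus_distr_l, <- Rmult_assoc, <- !sumR_scal.
  f_equal; apply sumR_ext; intro d; unfold Tm, Dw; cbn [trans_prod ren_prob energy];
    rewrite last_cons, exp_plus; try rewrite exp_0; ring.
Qed.

Lemma Fq_S K eps beta h a g def n :
  Fq K eps beta h a g def (S n) =
  Qtrans eps a true * (K (S g) * Dw beta h true * Fq K eps beta h true 0 true n + Fq K eps beta h true (S g) false n)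
  + Qtrans eps a false * (K (S g) * Dw beta h false * Fq K eps beta h false 0 true n + Fq K eps beta h false (S g) false n).
Proof.
  unfold Fq at 1. cbn [blists]. rewrite sumR_app, !sumR_map.
  rewrite (sumR_ext _ _ _ (fun ws => inner_S K eps beta h a g def true ws n)).
  rewrite (sumR_ext _ _ _ (fun ws => inner_S K eps beta h a g def false ws n)).
  rewrite !sumR_scal, !sumR_plus, !sumR_scal. unfold Fq. ring.
Qed.

Lemma Fq_0 K eps beta h a g def : Fq K eps beta h a g def 0 = (1 - Kcum K g) * indic def.
Proof. unfold Fq, Tm; simpl. rewrite exp_0. ring. Qed.

Lemma EZ_Fq K eps beta h N :
  EZ K eps beta h N = / 2 * Fq K eps beta h true 0 false N + / 2 * Fq K eps beta h false 0 false N.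
Proof.
  unfold EZ, Zq. cbn [blists]. rewrite sumR_app, !sumR_map. unfold Fq.
  rewrite <- !sumR_scal. f_equal; apply sumR_ext; intro ws; cbn [mc_prob tl];
  rewrite Rmult_assoc, <- sumR_scal; f_equal; apply sumR_ext; intro d; unfold Tm; ring.
Qed.
Fixpoint ssum (f : nat -> R) (n : nat) : R :=
  match n with O => 0 | S m => ssum f m + f m end.

Lemma ssum_front f n : ssum f (S n) = f O + ssum (fun i => f (S i)) n.
Proof. induction n; simpl in *; [ring|]. rewrite IHn; ring. Qed.
Lemma ssum_ext f g n : (forall i, (i < n)%nat -> f i = g i) -> ssum f n = ssum g n.
Proof. induction n; intro H; simpl; [ring|]. rewrite IHn. rewrite H. ring. lia. intros; apply H; lia. Qed.
Lemma ssum_le f g n : (forall i, (i < n)%nat -> f i <= g i) -> ssum f n <= ssum g n.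
Proof. induction n; intro H; simpl; [lra|]. assert (f n <= g n) by (apply H; lia).
  assert (ssum f n <= ssum g n) by (apply IHn; intros; apply H; lia). lra. Qed.
Lemma ssum_plus f g n : ssum (fun i => f i + g i) n = ssum f n + ssum g n.
Proof. induction n; simpl; [ring|rewrite IHn; ring]. Qed.
Lemma ssum_scal f c n : ssum (fun i => c * f i) n = c * ssum f n.
Proof. induction n; simpl; [ring|rewrite IHn; ring]. Qed.
Lemma ssum_nonneg f n : (forall i, (i < n)%nat -> 0 <= f i) -> 0 <= ssum f n.
Proof. intro H. assert (ssum (fun _ => 0) n <= ssum f n) by (apply ssum_le; auto).
  assert (ssum (fun _ => 0) n = 0) by (clear; induction n; simpl; [ring| rewrite IHn; ring]). lra. Qed.
Lemma ssum_mono f m n : (forall i, 0 <= f i) -> (m <= n)%nat -> ssum f m <= ssum f n.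
Proof. intros H Hmn; induction Hmn; [lra|]. simpl. specialize (H m0). lra. Qed.
Lemma ssum_sumf f n : ssum f (S n) = sum_f_R0 f n.
Proof. induction n; simpl in *; [ring|]. rewrite <- IHn. simpl. ring. Qed.

Definition sg (a c : bool) : R := if Bool.eqb a c then 1 else -1.
Definition Qt eps (t : nat) (a c : bool) : R := (1 + (2 * eps - 1) ^ t * sg a c) / 2.
Definition Wv eps beta h (t : nat) (a : bool) (v : bool -> R) : R :=
  Qt eps t a true * Dw beta h true * v true + Qt eps t a false * Dw beta h false * v false.
Definition Jf K eps beta h (a : bool) (n : nat) : R := Fq K eps beta h a 0 true n.

Lemma Qtrans_Qt eps a b : Qtrans eps a b = Qt eps 1 a b.
Proof. unfold Qtrans, Qt, sg; destruct a, b; simpl; field. Qed.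

Lemma CK eps t a c :
  Qtrans eps a true * Qt eps t true c + Qtrans eps a false * Qt eps t false c = Qt eps (S t) a c.
Proof. unfold Qtrans, Qt, sg; destruct a, c; simpl; field. Qed.

Lemma CKW eps beta h t a v :
  Qtrans eps a true * Wv eps beta h t true v + Qtrans eps a false * Wv eps beta h t false v
  = Wv eps beta h (S t) a v.
Proof. unfold Wv. rewrite <- !CK. ring. Qed.

Lemma unroll K eps beta h n : forall a g,
  Fq K eps beta h a g false n =
  ssum (fun i => K (g + S i)%nat * Wv eps beta h (S i) a (fun c => Jf K eps beta h c (n - S i))) n.
Proof.
  induction n; intros a g.
  - rewrite Fq_0. simpl. ring.
  - rewrite Fq_S, !IHn, ssum_front.
    assert (E1 : ssum (fun i => K (g + S (S i))%nat * Wv eps beta h (S (S i)) a (fun c => Jf K eps beta h c (S n - S (S i)))) n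
      = Qtrans eps a true * ssum (fun i => K (S g + S i)%nat * Wv eps beta h (S i) true (fun c => Jf K eps beta h c (n - S i))) n
      + Qtrans eps a false * ssum (fun i => K (S g + S i)%nat * Wv eps beta h (S i) false (fun c => Jf K eps beta h c (n - S i))) n).
    { rewrite <- !ssum_scal, <- ssum_plus. apply ssum_ext; intros i _.
      rewrite <- CKW. replace (g + S (S i))%nat with (S g + S i)%nat by lia. simpl (S n - S (S i))%nat. ring. }
    rewrite E1. replace (S n - 1)%nat with n by lia. replace (g + 1)%nat with (S g) by lia.
    unfold Jf, Wv. rewrite !Qtrans_Qt. ring.
Qed.

Lemma Jf_0 K eps beta h a : Jf K eps beta h a 0 = 1.
Proof. unfold Jf; rewrite Fq_0; simpl; ring. Qed.

Lemma Jf_S K eps beta h a n :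
  Jf K eps beta h a (S n) =
  ssum (fun i => K (S i) * Wv eps beta h (S i) a (fun c => Jf K eps beta h c (S n - S i))) (S n).
Proof.
  unfold Jf at 1. transitivity (Fq K eps beta h a 0 false (S n)).
  { rewrite !Fq_S. reflexivity. }
  rewrite unroll. apply ssum_ext; intros; reflexivity.
Qed.

Lemma EZ_J K eps beta h n :
  EZ K eps beta h (S n) = / 2 * Jf K eps beta h true (S n) + / 2 * Jf K eps beta h false (S n).
Proof. rewrite EZ_Fq. unfold Jf. rewrite !(Fq_S _ _ _ _ _ _ true), !(Fq_S _ _ _ _ _ _ false). reflexivity. Qed.
Lemma pow_bound x t : -1 <= x <= 1 -> -1 <= x ^ t <= 1.
Proof. intro Hx; induction t; simpl; [lra|]. 
  assert (Rabs (x * x ^ t) <= 1).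
  { rewrite Rabs_mult. apply Rabs_le in IHt. assert (Rabs x <= 1) by (apply Rabs_le; lra).
    assert (0 <= Rabs x) by apply Rabs_pos. assert (0 <= Rabs (x ^ t)) by apply Rabs_pos. nra. }
  revert H; unfold Rabs; destruct Rcase_abs; intros; lra. Qed.

Lemma Qt_nonneg eps t a c : -1 <= 2 * eps - 1 <= 1 -> 0 <= Qt eps t a c.
Proof. intro Hr. pose proof (pow_bound _ t Hr). unfold Qt, sg; destruct (Bool.eqb a c); lra. Qed.

Lemma Qt_sum eps t a : Qt eps t a true + Qt eps t a false = 1.
Proof. unfold Qt, sg; destruct a; simpl; field. Qed.

Lemma Dw_pos beta h b : 0 < Dw beta h b.
Proof. apply exp_pos. Qed.

Lemma Wv_mono eps beta h t a v w : -1 <= 2 * eps - 1 <= 1 ->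
  (forall c, v c <= w c) -> Wv eps beta h t a v <= Wv eps beta h t a w.
Proof. intros Hr H. unfold Wv.
  pose proof (Qt_nonneg eps t a true Hr). pose proof (Qt_nonneg eps t a false Hr).
  pose proof (Dw_pos beta h true). pose proof (Dw_pos beta h false).
  pose proof (H true); pose proof (H false).
  apply Rplus_le_compat; apply Rmult_le_compat_l; try nra. Qed.

Lemma Wv_scal eps beta h t a v k : Wv eps beta h t a (fun c => k * v c) = k * Wv eps beta h t a v.
Proof. unfold Wv; ring. Qed.

Lemma Wv_pos eps beta h t a v : -1 <= 2 * eps - 1 <= 1 -> (forall c, 0 < v c) -> 0 < Wv eps beta h t a v.
Proof. intros Hr H. unfold Wv.
  pose proof (Qt_nonneg eps t a true Hr). pose proof (Qt_nonneg eps t a false Hr).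
  pose proof (Qt_sum eps t a).
  pose proof (Dw_pos beta h true). pose proof (Dw_pos beta h false).
  pose proof (H true); pose proof (H false).
  assert (0 < Dw beta h true * v true) by nra. assert (0 < Dw beta h false * v false) by nra.
  rewrite !Rmult_assoc.
  destruct (Rle_dec (1/2) (Qt eps t a true)).
  - assert (0 < Qt eps t a true * (Dw beta h true * v true)) by (apply Rmult_lt_0_compat; lra).
    assert (0 <= Qt eps t a false * (Dw beta h false * v false)) by (apply Rmult_le_pos; lra). lra.
  - assert (0 < Qt eps t a false * (Dw beta h false * v false)) by (apply Rmult_lt_0_compat; lra).
    assert (0 <= Qt eps t a true * (Dw beta h true * v true)) by (apply Rmult_le_pos; lra). lra.
Qed.

Lemma Wv_nonneg eps beta h t a v : -1 <= 2 * eps - 1 <= 1 -> (forall c, 0 <= v c) -> 0 <= Wv eps beta h t a v.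
Proof. intros Hr H. unfold Wv.
  pose proof (Qt_nonneg eps t a true Hr). pose proof (Qt_nonneg eps t a false Hr).
  pose proof (Dw_pos beta h true). pose proof (Dw_pos beta h false).
  pose proof (H true); pose proof (H false).
  rewrite !Rmult_assoc. apply Rplus_le_le_0_compat; apply Rmult_le_pos; auto; apply Rmult_le_pos; lra.
Qed.

Lemma strong_ind (P : nat -> Prop) : (forall n, (forall m, (m < n)%nat -> P m) -> P n) -> forall n, P n.
Proof. intros H n. assert (forall k m, (m <= k)%nat -> P m).
  { induction k; intros m Hm. - apply H; intros; lia. - apply H; intros; apply IHk; lia. }
  apply (H0 n); lia. Qed.

Lemma J_nonneg K eps beta h (HK : forall n, (1 <= n)%nat -> 0 < K n) (Hr : -1 <= 2 * eps - 1 <= 1) :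
  forall n a, 0 <= Jf K eps beta h a n.
Proof.
  apply (strong_ind (fun n => forall a, 0 <= Jf K eps beta h a n)). intros n IH a.
  destruct n. { rewrite Jf_0; lra. }
  rewrite Jf_S. apply ssum_nonneg. intros i Hi.
  apply Rmult_le_pos. { left; apply HK; lia. }
  apply Wv_nonneg; auto. intro c; apply IH; lia.
Qed.

Lemma J_pos K eps beta h (HK : forall n, (1 <= n)%nat -> 0 < K n) (Hr : -1 <= 2 * eps - 1 <= 1) :
  forall n a, 0 < Jf K eps beta h a n.
Proof.
  intros n a. destruct n. { rewrite Jf_0; lra. }
  rewrite Jf_S. cbn [ssum].
  assert (0 <= ssum (fun i => K (S i) * Wv eps beta h (S i) a (fun c => Jf K eps beta h c (S n - S i))) n).
  { apply ssum_nonneg; intros. apply Rmult_le_pos. left; apply HK; lia.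
    apply Wv_nonneg; auto. intro; apply J_nonneg; auto. }
  assert (0 < K (S n) * Wv eps beta h (S n) a (fun c => Jf K eps beta h c (S n - S n))).
  { apply Rmult_lt_0_compat. apply HK; lia. apply Wv_pos; auto. intro c.
    replace (S n - S n)%nat with 0%nat by lia. rewrite Jf_0; lra. }
  lra.
Qed.

Lemma J_upper K eps beta h (HK : forall n, (1 <= n)%nat -> 0 < K n) (Hr : -1 <= 2 * eps - 1 <= 1)
  (y : bool -> R) (C : R) (HC0 : 0 <= C) (HC : forall c, 1 <= C * y c)
  (Hy : forall n a, ssum (fun i => K (S i) * Wv eps beta h (S i) a y) n <= y a) :
  forall n a, Jf K eps beta h a n <= C * y a.
Proof.
  apply (strong_ind (fun n => forall a, Jf K eps beta h a n <= C * y a)). intros n IH a.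
  destruct n. { rewrite Jf_0; apply HC. }
  rewrite Jf_S.
  apply Rle_trans with (ssum (fun i => C * (K (S i) * Wv eps beta h (S i) a y)) (S n)).
  { apply ssum_le; intros i Hi.
    replace (C * (K (S i) * Wv eps beta h (S i) a y)) with (K (S i) * Wv eps beta h (S i) a (fun c => C * y c)) by (rewrite Wv_scal; ring).
    apply Rmult_le_compat_l. left; apply HK; lia. apply Wv_mono; auto. intro; apply IH; lia. }
  rewrite ssum_scal. apply Rmult_le_compat_l; auto.
Qed.

Lemma J_base K eps beta h (HK : forall n, (1 <= n)%nat -> 0 < K n) (Hr : -1 <= 2 * eps - 1 <= 1)
  (nu : R) (Hnu : 0 < nu) (y : bool -> R) (Hy : forall c, 0 < y c) :
  forall T, exists c0, 0 < c0 /\ forall m a, (m < T)%nat -> c0 * y a <= nu ^ m * Jf K eps beta h a m.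
Proof.
  induction T.
  - exists 1; split; [lra| intros; lia].
  - destruct IHT as [c0 [Hc0 Hb]].
    set (r := fun a => nu ^ T * Jf K eps beta h a T / y a).
    assert (Hr' : forall a, 0 < r a).
    { intro a; unfold r. apply Rdiv_lt_0_compat; auto. apply Rmult_lt_0_compat. apply pow_lt; auto. apply J_pos; auto. }
    exists (Rmin c0 (Rmin (r true) (r false))). split.
    { apply Rmin_glb_lt; auto. apply Rmin_glb_lt; auto. }
    intros m a Hm. destruct (Nat.eq_dec m T) as [->|Hne].
    + assert (Rmin c0 (Rmin (r true) (r false)) <= r a).
      { eapply Rle_trans; [apply Rmin_r|]. destruct a; [apply Rmin_l|apply Rmin_r]. }
      pose proof (Hy a).
      apply Rle_trans with (r a * y a). apply Rmult_le_compat_r; lra.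
      unfold r. right; field; lra.
    + apply Rle_trans with (c0 * y a). apply Rmult_le_compat_r. left; auto. apply Rmin_l.
      apply Hb; lia.
Qed.

Lemma J_lower K eps beta h (HK : forall n, (1 <= n)%nat -> 0 < K n) (Hr : -1 <= 2 * eps - 1 <= 1)
  (nu : R) (Hnu : 0 < nu) (y : bool -> R) (Hy : forall c, 0 < y c) (T : nat)
  (HT : forall a, y a <= ssum (fun i => nu ^ (S i) * (K (S i) * Wv eps beta h (S i) a y)) T) :
  exists c0, 0 < c0 /\ forall m a, c0 * y a <= nu ^ m * Jf K eps beta h a m.
Proof.
  destruct (J_base K eps beta h HK Hr nu Hnu y Hy T) as [c0 [Hc0 Hb]].
  exists c0; split; auto.
  apply (strong_ind (fun m => forall a, c0 * y a <= nu ^ m * Jf K eps beta h a m)). intros m IH a.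
  destruct (le_lt_dec T m) as [HTm|HTm]; [|apply Hb; auto].
  destruct m.
  { exfalso. assert (T = 0%nat) by lia. subst. pose proof (HT a). pose proof (Hy a). simpl in *. lra. }
  assert (Hnn : forall i, 0 <= nu ^ (S i) * (K (S i) * Wv eps beta h (S i) a y)).
  { intro i. apply Rmult_le_pos. left; apply pow_lt; auto. apply Rmult_le_pos. left; apply HK; lia.
    apply Wv_nonneg; auto. intro; left; auto. }
  apply Rle_trans with (c0 * ssum (fun i => nu ^ (S i) * (K (S i) * Wv eps beta h (S i) a y)) T).
  { apply Rmult_le_compat_l; [lra|auto]. }
  apply Rle_trans with (c0 * ssum (fun i => nu ^ (S i) * (K (S i) * Wv eps beta h (S i) a y)) (S m)).
  { apply Rmult_le_compat_l; [lra|]. apply ssum_mono; auto. }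
  rewrite Jf_S, <- !ssum_scal. apply ssum_le. intros i Hi.
  replace (nu ^ S m) with (nu ^ S i * nu ^ (S m - S i)) by (rewrite <- pow_add; f_equal; lia).
  apply Rle_trans with (nu ^ S i * (K (S i) * Wv eps beta h (S i) a (fun c => nu ^ (S m - S i) * Jf K eps beta h c (S m - S i)))).
  { 
    replace (c0 * (nu ^ S i * (K (S i) * Wv eps beta h (S i) a y))) with (nu ^ S i * (K (S i) * (c0 * Wv eps beta h (S i) a y))) by ring.
    apply Rmult_le_compat_l. left; apply pow_lt; auto. apply Rmult_le_compat_l. left; apply HK; lia.
    rewrite <- Wv_scal. apply Wv_mono; auto. intro c. apply IH. lia. }
  rewrite Wv_scal. right; ring.
Qed.
Definition conv (f : nat -> R) (l : R) := Un_cv (fun n => ssum f n) l.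

Lemma inf_conv f l : infinite_sum f l -> conv f l.
Proof. intros H e He. destruct (H e He) as [N HN]. exists (S N). intros n Hn.
  destruct n; [lia|]. rewrite ssum_sumf. apply HN. lia. Qed.

Lemma conv_ext f g l : (forall i, f i = g i) -> conv f l -> conv g l.
Proof. intros E H e He. destruct (H e He) as [N HN]. exists N. intros n Hn.
  rewrite <- (ssum_ext f g n); auto. Qed.

Lemma conv_plus f g l1 l2 : conv f l1 -> conv g l2 -> conv (fun i => f i + g i) (l1 + l2).
Proof. intros H1 H2. unfold conv.
  apply (Un_cv_ext (fun n => ssum f n + ssum g n)). { intro; rewrite ssum_plus; reflexivity. }
  apply CV_plus; auto. Qed.

Lemma conv_minus f g l1 l2 : conv f l1 -> conv g l2 -> conv (fun i => f i - g i) (l1 - l2).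
Proof. intros H1 H2. unfold conv.
  apply (Un_cv_ext (fun n => ssum f n - ssum g n)).
  { intro n; induction n; simpl; [ring| rewrite <- IHn; ring]. }
  apply CV_minus; auto. Qed.

Lemma conv_scal f c l : conv f l -> conv (fun i => c * f i) (c * l).
Proof. intros H. unfold conv.
  apply (Un_cv_ext (fun n => c * ssum f n)). { intro; rewrite ssum_scal; reflexivity. }
  apply CV_mult; auto. intros e He; exists 0%nat; intros. unfold Rdist. rewrite Rminus_diag, Rabs_R0; lra. Qed.

Lemma conv_le f l : conv f l -> (forall i, 0 <= f i) -> forall n, ssum f n <= l.
Proof. intros H Hf n. destruct (Rle_dec (ssum f n) l) as [|Hn]; auto. exfalso.
  destruct (H (ssum f n - l)) as [N HN]; [lra|].
  specialize (HN (max n N) ltac:(lia)). pose proof (ssum_mono f n (max n N) Hf ltac:(lia)).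
  unfold Rdist in HN. revert HN; unfold Rabs; destruct Rcase_abs; intros; lra. Qed.

Lemma conv_near f l : conv f l -> forall d, 0 < d -> exists N, forall n, (N <= n)%nat -> l - d < ssum f n.
Proof. intros H d Hd. destruct (H d Hd) as [N HN]. exists N. intros n Hn. specialize (HN n Hn).
  unfold Rdist in HN. revert HN; unfold Rabs; destruct Rcase_abs; intros; lra. Qed.

Definition Pm (p : R) (a c : bool) : R := if Bool.eqb a c then p else 1 - p.

Lemma conv_Qt K eps p a c
  (H1 : conv (fun i => K (S i)) 1)
  (Hp : conv (fun i => K (S i) * ((1 + (2 * eps - 1) ^ (S i)) / 2)) p) :
  conv (fun i => K (S i) * Qt eps (S i) a c) (Pm p a c).
Proof.
  unfold Pm, Qt, sg. destruct (Bool.eqb a c).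
  - eapply conv_ext; [|exact Hp]. intro i; cbv beta; field.
  - eapply conv_ext; [|apply (conv_minus _ _ _ _ H1 Hp)]. intro i; cbv beta; field.
Qed.

Lemma conv_W K eps beta h p a y
  (H1 : conv (fun i => K (S i)) 1)
  (Hp : conv (fun i => K (S i) * ((1 + (2 * eps - 1) ^ (S i)) / 2)) p) :
  conv (fun i => K (S i) * Wv eps beta h (S i) a y)
    (Dw beta h true * y true * Pm p a true + Dw beta h false * y false * Pm p a false).
Proof.
  eapply conv_ext; [|apply conv_plus; apply conv_scal; apply conv_Qt; eauto].
  intro i; unfold Wv; cbv beta; ring.
Qed.
Lemma p_bounds K eps p (HK : forall n, (1 <= n)%nat -> 0 < K n) (Heps : 0 <= eps < 1)
  (H1 : conv (fun i => K (S i)) 1)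
  (Hp : conv (fun i => K (S i) * ((1 + (2 * eps - 1) ^ (S i)) / 2)) p) : 0 < p < 1.
Proof.
  assert (Hr : -1 <= 2 * eps - 1 <= 1) by lra.
  split.
  - assert (Hn : forall i, 0 <= K (S i) * ((1 + (2 * eps - 1) ^ (S i)) / 2)).
    { intro i. apply Rmult_le_pos. left; apply HK; lia. pose proof (pow_bound _ (S i) Hr). lra. }
    pose proof (conv_le _ _ Hp Hn 2). simpl in H. 
    pose proof (HK 1%nat ltac:(lia)). pose proof (HK 2%nat ltac:(lia)).
    assert (0 <= K 1%nat * ((1 + (2 * eps - 1) * 1) / 2)) by (apply Rmult_le_pos; lra).
    assert (0 < K 2%nat * ((1 + (2 * eps - 1) * ((2 * eps - 1) * 1)) / 2)).
    { apply Rmult_lt_0_compat; auto. pose proof (Rle_0_sqr (2*eps-1)). unfold Rsqr in H4. lra. }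
    lra.
  - pose proof (conv_Qt K eps p true false H1 Hp) as Hc. simpl in Hc.
    assert (Hn : forall i, 0 <= K (S i) * Qt eps (S i) true false).
    { intro i. apply Rmult_le_pos. left; apply HK; lia. apply Qt_nonneg; auto. }
    pose proof (conv_le _ _ Hc Hn 1). simpl in H. unfold Qt, sg, Pm in H. simpl in H.
    pose proof (HK 1%nat ltac:(lia)).
    assert (0 < K 1%nat * ((1 + (2 * eps - 1) * 1 * -1) / 2)) by (apply Rmult_lt_0_compat; lra).
    lra.
Qed.

Definition mu p beta := p * cosh beta + sqrt (p ^ 2 * cosh beta ^ 2 - 2 * p + 1).
Definition yv p beta (b : bool) := if b then (1 - p) * exp (- beta) else mu p beta - p * exp beta.

Lemma Dw_t beta h : Dw beta h true = exp h * exp beta.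
Proof. unfold Dw, spin. rewrite Rmult_1_r, exp_plus; ring. Qed.
Lemma Dw_f beta h : Dw beta h false = exp h * exp (- beta).
Proof. unfold Dw, spin. replace (beta * -1 + h) with (- beta + h) by ring. rewrite exp_plus; ring. Qed.

Lemma EF beta : exp beta * exp (- beta) = 1.
Proof. rewrite exp_Ropp. field. apply Rgt_not_eq, exp_pos. Qed.

Lemma mu_facts p beta : 0 < p < 1 ->
  0 < mu p beta /\ 0 < yv p beta true /\ 0 < yv p beta false /\
  mu p beta * mu p beta - p * (exp beta + exp (- beta)) * mu p beta + 2 * p - 1 = 0.
Proof.
  intro Hp. pose proof (EF beta) as HEF. set (E := exp beta) in *. set (F := exp (- beta)) in *.
  assert (HE : 0 < E) by apply exp_pos. assert (HF : 0 < F) by apply exp_pos.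
  assert (Hc : cosh beta = (E + F) / 2) by reflexivity.
  set (D := p ^ 2 * cosh beta ^ 2 - 2 * p + 1).
  assert (HD : 0 <= D).
  { unfold D; rewrite Hc.
    replace (p ^ 2 * ((E + F) / 2) ^ 2 - 2 * p + 1) with ((p * ((E - F) / 2)) * (p * ((E - F) / 2)) + p * p * (E * F) - 2 * p + 1) by field.
    rewrite HEF. pose proof (Rle_0_sqr (p * ((E - F) / 2))). pose proof (Rle_0_sqr (1 - p)). unfold Rsqr in *. lra. }
  set (s := sqrt D). assert (Hs : s * s = D) by (apply sqrt_sqrt; auto). assert (Hs0 : 0 <= s) by apply sqrt_pos.
  assert (Hmu : mu p beta = p * ((E + F) / 2) + s) by (unfold mu; rewrite Hc; reflexivity).
  split; [|split; [|split]].
  - rewrite Hmu. assert (0 < p * ((E + F) / 2)) by (apply Rmult_lt_0_compat; lra). lra.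
  - simpl. apply Rmult_lt_0_compat; [lra| apply exp_pos].
  - simpl. fold E. rewrite Hmu. set (A := p * (E - F) / 2).
    assert (HsA : s * s - A * A = (1 - p) * (1 - p)).
    { rewrite Hs. unfold D, A. rewrite Hc. 
      replace (p ^ 2 * ((E + F) / 2) ^ 2 - 2 * p + 1 - p * (E - F) / 2 * (p * (E - F) / 2)) with (p * p * (E * F) - 2 * p + 1) by field.
      rewrite HEF. ring. }
    assert (s > A).
    { destruct (Rlt_le_dec A 0). lra. assert (0 < (1 - p) * (1 - p)) by nra. nra. }
    unfold A in H. lra.
  - rewrite Hmu. transitivity (s * s - D). { unfold D; rewrite Hc; field. } rewrite Hs; ring.
Qed.

Lemma eigen p beta h a : 0 < p < 1 ->
  Dw beta h true * yv p beta true * Pm p a true + Dw beta h false * yv p beta false * Pm p a false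
  = exp h * mu p beta * yv p beta a.
Proof.
  intro Hp. destruct (mu_facts p beta Hp) as [_ [_ [_ Hk]]].
  pose proof (EF beta) as HEF. rewrite Dw_t, Dw_f. unfold yv, Pm.
  set (E := exp beta) in *. set (F := exp (- beta)) in *. set (m := mu p beta) in *.
  destruct a; simpl.
  - transitivity (exp h * ((1-p) * F * m + p * (1 - p) * (E * F - E * F))). ring. ring.
  - transitivity (exp h * ((1 - p) * (1 - p) * (E * F) + p * F * m - p * p * (E * F))). ring.
    rewrite HEF. replace (exp h * m * (m - p * E)) with (exp h * (m * m - p * E * m)) by ring.
    f_equal. lra.
Qed.
Lemma ln_le' a b : 0 < a -> a <= b -> ln a <= ln b.
Proof. intros Ha Hab. destruct Hab as [H|H]. left; apply ln_increasing; auto. rewrite H; lra. Qed.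

Lemma exp_le' a b : a <= b -> exp a <= exp b.
Proof. intros [H|H]. left; apply exp_increasing; auto. rewrite H; lra. Qed.

Lemma exp_pow x n : exp x ^ n = exp (INR n * x).
Proof. induction n. simpl. rewrite Rmult_0_l, exp_0; ring.
  rewrite S_INR. simpl. rewrite IHn, <- exp_plus. f_equal; ring. Qed.

Lemma div_lt u m e : 0 < m -> u < e * m -> u / m < e.
Proof. intros Hm H. apply (Rmult_lt_reg_r m); auto. unfold Rdiv. rewrite Rmult_assoc, Rinv_l; lra. Qed.
Lemma div_gt u m e : 0 < m -> - e * m < u -> - e < u / m.
Proof. intros Hm H. apply (Rmult_lt_reg_r m); auto. unfold Rdiv. rewrite Rmult_assoc, Rinv_l; lra. Qed.
Lemma div_lt_inv u m e : 0 < m -> u / m < e -> u < e * m.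
Proof. intros Hm H. replace u with (u / m * m) by (field; lra). apply Rmult_lt_compat_r; auto. Qed.

Lemma EZ_pos K eps beta h (HK : forall n, (1 <= n)%nat -> 0 < K n) (Hr : -1 <= 2 * eps - 1 <= 1) n :
  0 < EZ K eps beta h (S n).
Proof. rewrite EZ_J. pose proof (J_pos K eps beta h HK Hr (S n) true). pose proof (J_pos K eps beta h HK Hr (S n) false). lra. Qed.

Lemma upper_EZ K eps beta h (HK : forall n, (1 <= n)%nat -> 0 < K n) (Hr : -1 <= 2 * eps - 1 <= 1)
  (y : bool -> R) (Hy : forall c, 0 < y c) (L : R) (HL : L <= 1)
  (Hc : forall a, conv (fun i => K (S i) * Wv eps beta h (S i) a y) (L * y a)) :
  exists B, forall n, ln (EZ K eps beta h (S n)) <= B.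
Proof.
  set (C := / y true + / y false).
  pose proof (Hy true); pose proof (Hy false).
  assert (HC0 : 0 <= C). { unfold C. pose proof (Rinv_0_lt_compat _ H). pose proof (Rinv_0_lt_compat _ H0). lra. }
  assert (HC : forall c, 1 <= C * y c).
  { intro c. unfold C. pose proof (Rinv_0_lt_compat _ H). pose proof (Rinv_0_lt_compat _ H0).
    destruct c.
    - replace ((/ y true + / y false) * y true) with (1 + / y false * y true) by (field; lra). nra.
    - replace ((/ y true + / y false) * y false) with (1 + / y true * y false) by (field; lra). nra. }
  assert (Hs : forall n a, ssum (fun i => K (S i) * Wv eps beta h (S i) a y) n <= y a).
  { intros n a. eapply Rle_trans. apply (conv_le _ _ (Hc a)).
    intro i. apply Rmult_le_pos. left; apply HK; lia. apply Wv_nonneg; auto. intro; left; auto.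
    pose proof (Hy a). nra. }
  pose proof (J_upper K eps beta h HK Hr y C HC0 HC Hs) as HJ.
  exists (ln (/ 2 * (C * y true) + / 2 * (C * y false))). intro n.
  apply ln_le'. apply EZ_pos; auto. rewrite EZ_J. pose proof (HJ (S n) true). pose proof (HJ (S n) false). lra.
Qed.

Lemma lower_EZ K eps beta h (HK : forall n, (1 <= n)%nat -> 0 < K n) (Hr : -1 <= 2 * eps - 1 <= 1)
  (y : bool -> R) (Hy : forall c, 0 < y c) (x : R) (T : nat)
  (HT : forall a, y a <= ssum (fun i => exp x ^ (S i) * (K (S i) * Wv eps beta h (S i) a y)) T) :
  exists A, forall n, A - INR (S n) * x <= ln (EZ K eps beta h (S n)).
Proof.
  destruct (J_lower K eps beta h HK Hr (exp x) (exp_pos x) y Hy T HT) as [c0 [Hc0 HJ]].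
  exists (ln (/ 2 * c0 * y true)). intro n.
  pose proof (Hy true).
  assert (Hp : 0 < / 2 * c0 * y true) by (apply Rmult_lt_0_compat; [apply Rmult_lt_0_compat|]; lra).
  replace (ln (/ 2 * c0 * y true) - INR (S n) * x) with (ln (/ 2 * c0 * y true * exp (- (INR (S n) * x)))).
  2:{ rewrite ln_mult; [rewrite ln_exp; ring | auto | apply exp_pos]. }
  apply ln_le'. apply Rmult_lt_0_compat; auto; apply exp_pos.
  rewrite EZ_J. pose proof (J_pos K eps beta h HK Hr (S n) false).
  specialize (HJ (S n) true). rewrite exp_pow in HJ.
  assert (c0 * y true * exp (- (INR (S n) * x)) <= Jf K eps beta h true (S n)).
  { rewrite exp_Ropp. apply (Rmult_le_reg_l (exp (INR (S n) * x))). apply exp_pos.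
    replace (exp (INR (S n) * x) * (c0 * y true * / exp (INR (S n) * x))) with (c0 * y true).
    auto. field. apply Rgt_not_eq, exp_pos. }
  lra.
Qed.
Theorem mainTheorem3 (K : nat -> R)
  (HKpos : forall n : nat, (1 <= n)%nat -> 0 < K n)
  (HKsum : infinite_sum (fun n => K (S n)) 1)
  (eps beta p : R) (Heps : 0 <= eps < 1) (Hbeta : 0 <= beta)
  (Hp : infinite_sum (fun n => K (S n) * ((1 + (2 * eps - 1) ^ (S n)) / 2)) p) :
  is_lub (zero_free_energy_set K eps beta)
    (- ln (p * cosh beta + sqrt (p ^ 2 * (cosh beta) ^ 2 - 2 * p + 1))).
Proof.
  assert (Hr : -1 <= 2 * eps - 1 <= 1) by lra.
  pose proof (inf_conv _ _ HKsum) as H1. pose proof (inf_conv _ _ Hp) as Hpc.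
  pose proof (p_bounds K eps p HKpos Heps H1 Hpc) as Hpb.
  destruct (mu_facts p beta Hpb) as [Hmu [Hy1 [Hy2 _]]].
  set (y := yv p beta).
  assert (Hy : forall c, 0 < y c) by (intro c; destruct c; auto).
  assert (Hconv : forall h a, conv (fun i => K (S i) * Wv eps beta h (S i) a y) (exp h * mu p beta * y a)).
  { intros h a. unfold y. rewrite <- eigen; auto. apply conv_W; auto. }
  change (is_lub (zero_free_energy_set K eps beta) (- ln (mu p beta))).
  set (m := mu p beta) in *. set (hc := - ln m).
  assert (Hehc : exp hc * m = 1).
  { unfold hc. rewrite exp_Ropp, exp_ln; auto. field; lra. }
  assert (HKW : forall h a i, 0 <= K (S i) * Wv eps beta h (S i) a y).
  { intros. apply Rmult_le_pos. left; apply HKpos; lia. apply Wv_nonneg; auto. intro; left; auto. }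
  split.
  - intros h Hh. destruct (Rle_dec h hc) as [|Hlt]; auto. exfalso.
    assert (Hk : 1 < exp h * m).
    { rewrite <- Hehc. apply Rmult_lt_compat_r; auto. apply exp_increasing. lra. }
    set (k := exp h * m) in *. set (th := (1 + k) / 2).
    assert (Hth : 1 < th) by (unfold th; lra).
    destruct (conv_near _ _ (Hconv h true) ((k - th) * y true)) as [N1 HN1].
    { apply Rmult_lt_0_compat; auto. unfold th; lra. }
    destruct (conv_near _ _ (Hconv h false) ((k - th) * y false)) as [N2 HN2].
    { apply Rmult_lt_0_compat; auto. unfold th; lra. }
    set (T := max (max N1 N2) 1).
    assert (HT1 : forall a, th * y a < ssum (fun i => K (S i) * Wv eps beta h (S i) a y) T).
    { intro a. destruct a.
      - specialize (HN1 T ltac:(unfold T; lia)). fold k in HN1. lra.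
      - specialize (HN2 T ltac:(unfold T; lia)). fold k in HN2. lra. }
    assert (HTpos : 0 < INR T) by (apply lt_0_INR; unfold T; lia).
    assert (Hlth : 0 < ln th) by (rewrite <- ln_1; apply ln_increasing; lra).
    set (x := - ln th / INR T).
    assert (Hpow : forall i, (i < T)%nat -> / th <= exp x ^ (S i)).
    { intros i Hi. rewrite exp_pow.
      replace (/ th) with (exp (INR T * x)).
      2:{ unfold x. replace (INR T * (- ln th / INR T)) with (- ln th) by (field; lra).
          rewrite exp_Ropp, exp_ln; lra. }
      apply exp_le'. assert (INR (S i) <= INR T) by (apply le_INR; lia).
      assert (x <= 0). { unfold x. unfold Rdiv. assert (0 < / INR T) by (apply Rinv_0_lt_compat; lra). nra. }
      nra. }
    assert (HT : forall a, y a <= ssum (fun i => exp x ^ (S i) * (K (S i) * Wv eps beta h (S i) a y)) T).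
    { intro a. apply Rle_trans with (ssum (fun i => / th * (K (S i) * Wv eps beta h (S i) a y)) T).
      - rewrite ssum_scal. specialize (HT1 a). apply (Rmult_le_reg_l th); [lra|].
        rewrite <- Rmult_assoc, Rinv_r, Rmult_1_l; lra.
      - apply ssum_le. intros i Hi. apply Rmult_le_compat_r; auto. }
    destruct (lower_EZ K eps beta h HKpos Hr y Hy x T HT) as [A HA].
    set (d := ln th / INR T).
    assert (Hd : 0 < d) by (unfold d; apply Rdiv_lt_0_compat; auto).
    destruct (Hh (d / 2) ltac:(lra)) as [N0 HN0].
    destruct (INR_archimed (d / 2) (Rabs A) ltac:(lra)) as [N3 HN3].
    set (n := max N0 N3).
    specialize (HN0 n ltac:(unfold n; lia)). specialize (HA n).
    assert (Hm : INR N3 <= INR (S n)) by (apply le_INR; unfold n; lia).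
    assert (HmP : 0 < INR (S n)) by (apply lt_0_INR; lia).
    unfold Rdist in HN0. rewrite Rminus_0_r in HN0. apply Rabs_def2 in HN0. destruct HN0 as [HN0 _].
    apply div_lt_inv in HN0; auto.
    assert (Hx : - (INR (S n) * x) = INR (S n) * d) by (unfold x, d; field; lra).
    pose proof (Rle_abs (- A)). rewrite Rabs_Ropp in H.
    assert (INR N3 * (d / 2) <= INR (S n) * (d / 2)) by (apply Rmult_le_compat_r; lra).
    lra.
  - intros b Hb. apply Hb. intros e He.
    destruct (upper_EZ K eps beta hc HKpos Hr y Hy 1 (Rle_refl 1)) as [B HB].
    { intro a. rewrite <- Hehc. auto. }
    set (x := e / 2).
    assert (Hx0 : 0 < x) by (unfold x; lra).
    assert (Hex : exp (- x) < 1) by (rewrite <- exp_0; apply exp_increasing; lra).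
    assert (Hcv : forall a, conv (fun i => K (S i) * Wv eps beta hc (S i) a y) (y a)).
    { intro a. replace (y a) with (exp hc * m * y a) by (rewrite Hehc; ring). auto. }
    destruct (conv_near _ _ (Hcv true) (y true * (1 - exp (- x)))) as [N1 HN1].
    { apply Rmult_lt_0_compat; auto; lra. }
    destruct (conv_near _ _ (Hcv false) (y false * (1 - exp (- x)))) as [N2 HN2].
    { apply Rmult_lt_0_compat; auto; lra. }
    set (T := max N1 N2).
    assert (HT1 : forall a, y a * exp (- x) < ssum (fun i => K (S i) * Wv eps beta hc (S i) a y) T).
    { intro a. destruct a.
      - specialize (HN1 T ltac:(unfold T; lia)). lra.
      - specialize (HN2 T ltac:(unfold T; lia)). lra. }
    assert (Hex1 : 1 <= exp x) by (rewrite <- exp_0; apply exp_le'; lra).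
    assert (HT : forall a, y a <= ssum (fun i => exp x ^ (S i) * (K (S i) * Wv eps beta hc (S i) a y)) T).
    { intro a. apply Rle_trans with (ssum (fun i => exp x * (K (S i) * Wv eps beta hc (S i) a y)) T).
      - rewrite ssum_scal. specialize (HT1 a).
        assert (exp x * (y a * exp (- x)) = y a) by (rewrite exp_Ropp; field; apply Rgt_not_eq, exp_pos).
        assert (exp x * (y a * exp (- x)) <= exp x * ssum (fun i => K (S i) * Wv eps beta hc (S i) a y) T)
          by (apply Rmult_le_compat_l; [left; apply exp_pos | lra]).
        lra.
      - apply ssum_le. intros i Hi. apply Rmult_le_compat_r; auto. simpl.
        pose proof (pow_R1_Rle _ i Hex1). nra. }
    destruct (lower_EZ K eps beta hc HKpos Hr y Hy x T HT) as [A HA].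
    destruct (INR_archimed e (Rabs B + 2 * Rabs A) He) as [N3 HN3].
    exists N3. intros n Hn.
    assert (Hm : INR N3 <= INR (S n)) by (apply le_INR; lia).
    assert (HmP : 0 < INR (S n)) by (apply lt_0_INR; lia).
    specialize (HA n). specialize (HB n).
    pose proof (Rle_abs B) as HaB. pose proof (Rle_abs (- A)) as HaA. rewrite Rabs_Ropp in HaA.
    assert (HNe : INR N3 * e <= INR (S n) * e) by (apply Rmult_le_compat_r; lra).
    unfold Rdist. rewrite Rminus_0_r. apply Rabs_def1.
    + apply div_lt; auto. rewrite Rmult_comm. pose proof (Rabs_pos A). lra.
    + apply div_gt; auto. unfold x in HA. replace (- e * INR (S n)) with (- (INR (S n) * e)) by ring. replace (INR (S n) * (e / 2)) with (INR (S n) * e / 2) in HA by field. pose proof (Rabs_pos B). lra.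
Qed.
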